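(* Let $p\ge5$ be a prime, let $\lambda,k\in\mathbb{N}$, and let $\zeta_k$ be a $k$th root of unity. Then for all integers $r$ and $m$ with $m\ge\lambda$, the power series $(1-(\zeta_k-q)^{krp})^m\in\mathbb{Z}[\zeta_k][[q]]$ satisfies $$(1-(\zeta_k-q)^{krp})^m\equiv O\!\left(q^{\lambda-1+p(m-\lambda-1)}\right)\pmod{p^\lambda},$$ i.e. every coefficient of $q^i$ with $i<\lambda-1+p(m-\lambda-1)$ lies in $p^\lambda\mathbb{Z}[\zeta_k]$.
   Context: $(\zeta_k-q)^{krp}$ for negative exponent is expanded as a power series in $q$ with coefficients in $\mathbb{Z}[\zeta_k]$. *)

(* Defs.v *)
From HB Require Import structures.
From mathcomp Require Import all_boot all_order all_algebra all_field.
Set Implicit Arguments. Unset Strict Implicit. Unset Printing Implicit Defensive.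
Import Order.TTheory GRing.Theory Num.Theory.
Local Open Scope ring_scope.

(* Formal power series in q over algC (the algebraic complex numbers),
   represented by their coefficient sequence: a i = coefficient of q^i. *)
Definition fps := nat -> algC.

Definition fps_one : fps := fun i => (i == 0%N)%:R.
Definition fps_sub (a b : fps) : fps := fun i => a i - b i.
Definition fps_mul (a b : fps) : fps :=
  fun i => \sum_(j < i.+1) a j * b (i - j)%N.
Definition fps_pow (a : fps) (n : nat) : fps := iter n (fps_mul a) fps_one.

Definition fps_lin (z : algC) : fps :=
  fun i => if i == 0%N then z else if i == 1%N then -1 else 0.
(* its inverse (for z <> 0): 1/(z - q) = sum_i z^{-(i+1)} q^i *)
Definition fps_lin_inv (z : algC) : fps := fun i => z^-1 ^+ i.+1.

Definition fps_zpow (z : algC) (n : int) : fps :=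
  match n with
  | Posz n => fps_pow (fps_lin z) n
  | Negz n => fps_pow (fps_lin_inv z) n.+1
  end.

(* c lies in p^l Z[z]:  c = p^l * P(z) for some integer polynomial P *)
Definition in_pow_ideal (p l : nat) (z c : algC) : Prop :=
  exists P : {poly int}, c = (p ^ l)%:R * (map_poly (fun x : int => x%:~R) P).[z].

(* Main.v *)
Require Import Defs.
From HB Require Import structures.
From mathcomp Require Import all_boot all_order all_algebra all_field.
From mathcomp Require Import ring zify.
Import Order.TTheory GRing.Theory Num.Theory.
Local Open Scope ring_scope.


Section S.
Variable z : algC.

Definition Sz (c : algC) : Prop :=
  exists P : {poly int}, c = (map_poly (fun x : int => x%:~R) P).[z].

Lemma Sz0 : Sz 0.
Proof. by exists 0; rewrite rmorph0 horner0. Qed.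
Lemma Sz1 : Sz 1.
Proof. by exists 1; rewrite rmorph1 hornerC. Qed.
Lemma SzX : Sz z.
Proof. by exists 'X; rewrite map_polyX hornerX. Qed.
Lemma SzD a b : Sz a -> Sz b -> Sz (a + b).
Proof. by move=> [P ->] [Q ->]; exists (P + Q); rewrite rmorphD hornerD. Qed.
Lemma SzN a : Sz a -> Sz (- a).
Proof. by move=> [P ->]; exists (- P); rewrite rmorphN hornerN. Qed.
Lemma SzM a b : Sz a -> Sz b -> Sz (a * b).
Proof. by move=> [P ->] [Q ->]; exists (P * Q); rewrite rmorphM hornerM. Qed.
Lemma SzMn a n : Sz a -> Sz (a *+ n).
Proof. move=> Ha; elim: n => [|n IH]; first by rewrite mulr0n; exact: Sz0.
by rewrite mulrS; apply: SzD. Qed.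
Lemma Szn n : Sz n%:R.
Proof. exact: SzMn Sz1. Qed.
Lemma SzX_n n : Sz (z ^+ n).
Proof. elim: n => [|n IH]; first by rewrite expr0; exact: Sz1.
by rewrite exprS; apply: SzM => //; exact: SzX. Qed.
Lemma Sz_sum (I : finType) (F : I -> algC) : (forall i, Sz (F i)) -> Sz (\sum_i F i).
Proof. move=> H; apply: (big_ind Sz) => //; [exact: Sz0 | exact: SzD]. Qed.
Lemma SzB a b : Sz a -> Sz b -> Sz (a - b).
Proof. by move=> Ha Hb; apply: SzD => //; apply: SzN. Qed.

Variable p : nat.
Definition Ip (l : nat) (c : algC) : Prop := exists s, Sz s /\ c = (p ^ l)%:R * s.

Lemma Ip_in l c : Ip l c -> in_pow_ideal p l z c.
Proof. by move=> [s [[P ->] ->]]; exists P. Qed.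
Lemma Ip0 l : Ip l 0.
Proof. by exists 0; split; [exact: Sz0 | rewrite mulr0]. Qed.
Lemma IpD l a b : Ip l a -> Ip l b -> Ip l (a + b).
Proof. by move=> [s [Hs ->]] [t [Ht ->]]; exists (s + t); split; [exact: SzD | rewrite mulrDr]. Qed.
Lemma IpMn l a n : Ip l a -> Ip l (a *+ n).
Proof. move=> [s [Hs ->]]; exists (s *+ n); split; [exact: SzMn | by rewrite mulrnAr]. Qed.
Lemma Ip_sum l (I : finType) (F : I -> algC) : (forall i, Ip l (F i)) -> Ip l (\sum_i F i).
Proof. move=> H; apply: (big_ind (Ip l)) => //; [exact: Ip0 | exact: IpD]. Qed.
Lemma Ip_pow l j c : (l <= j)%N -> Sz c -> Ip l ((p ^ j)%:R * c).
Proof. move=> hl Hc; exists ((p ^ (j - l))%:R * c); split.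
  by apply: SzM => //; apply: Szn.
by rewrite mulrA -natrM -expnD subnKC. Qed.

Definition intPol (P : {poly algC}) := forall j, Sz P`_j.

Lemma intP0 : intPol 0. Proof. by move=> j; rewrite coef0; exact: Sz0. Qed.
Lemma intPC c : Sz c -> intPol c%:P.
Proof. by move=> Hc j; rewrite coefC; case: ifP => _ //; exact: Sz0. Qed.
Lemma intP1 : intPol 1. Proof. by rewrite -polyC1; apply: intPC; exact: Sz1. Qed.
Lemma intPX : intPol 'X.
Proof. by move=> j; rewrite coefX; apply: Szn. Qed.
Lemma intPD P Q : intPol P -> intPol Q -> intPol (P + Q).
Proof. by move=> HP HQ j; rewrite coefD; apply: SzD. Qed.
Lemma intPN P : intPol P -> intPol (- P).
Proof. by move=> HP j; rewrite coefN; apply: SzN. Qed.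
Lemma intPB P Q : intPol P -> intPol Q -> intPol (P - Q).
Proof. by move=> HP HQ; apply: intPD => //; apply: intPN. Qed.
Lemma intPM P Q : intPol P -> intPol Q -> intPol (P * Q).
Proof. move=> HP HQ j; rewrite coefM; apply: Sz_sum => i; exact: SzM. Qed.
Lemma intPMn P n : intPol P -> intPol (P *+ n).
Proof. by move=> HP j; rewrite coefMn; apply: SzMn. Qed.
Lemma intPn n : intPol n%:R.
Proof. exact: intPMn intP1. Qed.
Lemma intPZ c P : Sz c -> intPol P -> intPol (c *: P).
Proof. by move=> Hc HP j; rewrite coefZ; apply: SzM. Qed.
Lemma intPXn P n : intPol P -> intPol (P ^+ n).
Proof. move=> HP; elim: n => [|n IH]; first by rewrite expr0; exact: intP1.
by rewrite exprS; apply: intPM. Qed.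
Lemma intP_sum (I : finType) (F : I -> {poly algC}) : (forall i, intPol (F i)) -> intPol (\sum_i F i).
Proof. move=> H; apply: (big_ind intPol) => //; [exact: intP0 | exact: intPD]. Qed.

Definition M (D : {poly algC}) := exists U V, intPol U /\ intPol V /\
  D = 'X^p * U + p%:R * ('X * V).

Lemma M0 : M 0.
Proof. exists 0, 0; split; [exact: intP0 | split; [exact: intP0 | by rewrite !mulr0 addr0]]. Qed.
Lemma MD a b : M a -> M b -> M (a + b).
Proof. move=> [U [V [HU [HV ->]]]] [U' [V' [HU' [HV' ->]]]].
exists (U + U'), (V + V'); split; [exact: intPD | split; [exact: intPD | ring]]. Qed.
Lemma MN a : M a -> M (- a).
Proof. move=> [U [V [HU [HV ->]]]]; exists (- U), (- V); split; [exact: intPN | split; [exact: intPN | ring]]. Qed.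
Lemma MM a Q : M a -> intPol Q -> M (a * Q).
Proof. move=> [U [V [HU [HV ->]]]] HQ; exists (U * Q), (V * Q); split; [exact: intPM | split; [exact: intPM | ring]]. Qed.
Lemma MMl a Q : M a -> intPol Q -> M (Q * a).
Proof. by rewrite mulrC; apply: MM. Qed.
Lemma M_sum (I : finType) (F : I -> {poly algC}) : (forall i, M (F i)) -> M (\sum_i F i).
Proof. move=> H; apply: (big_ind M) => //; [exact: M0 | exact: MD]. Qed.
Lemma MXX a b n : intPol a -> intPol b -> M (a - b) -> M (a ^+ n - b ^+ n).
Proof. move=> Ha Hb Hab; rewrite subrXX; apply: MM => //.
apply: intP_sum => i; apply: intPM; exact: intPXn. Qed.

End S.


Lemma Mbin (z : algC) (p : nat) : prime p -> odd p ->
  M z p ((z%:P - 'X)^+p - (z^+p)%:P).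
Proof.
move=> hp hodd.
rewrite exprDn big_ord_recl /= subn0 expr0 mulr1 bin0 mulr1n.
rewrite (_ : (z^+p)%:P = z%:P^+p); last by rewrite rmorphXn.
rewrite addrAC subrr add0r; apply: M_sum => i.
have hi : (i.+1 <= p)%N by [].
have -> : bump 0 i = i.+1 by [].
case: (ltngtP i.+1 p) => [hlt|hgt|heq].
- have := prime_dvd_bin hp (_ : (0 < i.+1 < p)%N).
  move=> /(_ hlt) /dvdnP [c hc]; rewrite hc.
  exists 0, ((z%:P)^+(p - i.+1) * (-1)^+(i.+1) * 'X^i *+ c).
  split; first exact: intP0.
  split.
    apply: intPMn; apply: intPM; last exact: intPXn (intPX z).
    apply: intPM; apply: intPXn; [apply: intPC; exact: SzX | apply: intPN; exact: intP1].
  rewrite (exprNn 'X) mulrnA (exprS 'X); ring.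
- by move: hgt; rewrite ltnNge hi.
- rewrite heq subnn binn expr0 mul1r mulr1n.
  exists (-1), 0; split; first by apply: intPN; exact: intP1.
  split; first exact: intP0.
  by rewrite (exprNn 'X) -signr_odd hodd expr1; ring.
Qed.


Lemma pow_agree (a : fps) (P : {poly algC}) N :
  (forall j, (j < N)%N -> P`_j = a j) ->
  forall n i, (i < N)%N -> (P ^+ n)`_i = fps_pow a n i.
Proof.
move=> HP; elim=> [|n IH] i hi.
  by rewrite expr0 coef1 /fps_pow /= /fps_one.
rewrite exprS coefM /fps_pow /= /fps_mul -/(fps_pow a n).
apply: eq_bigr => j _.
have hj : (j <= i)%N by rewrite -ltnS.
rewrite HP; last exact: leq_ltn_trans hj hi.
rewrite IH //; exact: leq_ltn_trans (leq_subr _ _) hi.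
Qed.

Lemma lin_agree z j : (z%:P - 'X)`_j = fps_lin z j.
Proof.
rewrite coefB coefC coefX /fps_lin.
by case: j => [|[|j]] //=; rewrite ?subr0 ?sub0r.
Qed.

Lemma Mpos (z : algC) (p k t : nat) : prime p -> odd p -> z ^+ k = 1 ->
  M z p (1 - (z%:P - 'X) ^+ (k * t * p)).
Proof.
move=> hp hodd hz.
have iz : intPol z (z%:P - 'X) by apply: intPB; [apply: intPC; exact: SzX | exact: intPX].
have h1 := MXX _ _ _ _ k (intPXn _ _ p iz) (intPC _ _ (SzX_n z p)) (Mbin _ _ hp hodd).
have e : ((z^+p)%:P)^+k = 1 :> {poly algC}.
  by rewrite -rmorphXn -exprM mulnC exprM hz expr1n rmorph1.
rewrite e in h1.
have h2 := MXX _ _ _ _ t (intPXn _ _ k (intPXn _ _ p iz)) (intP1 z) h1.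
rewrite expr1n -!exprM in h2.
have -> : (k * t * p = p * k * t)%N by ring.
rewrite -opprB -mulnA; exact: (MN _ _ _ h2).
Qed.

Definition Pinv (z : algC) N : {poly algC} := z^-1 *: \sum_(j < N) (z^-1 *: 'X)^+j.

Lemma Pinv_coef z N j : (j < N)%N -> (Pinv z N)`_j = fps_lin_inv z j.
Proof.
move=> hj; rewrite /Pinv coefZ coef_sum /fps_lin_inv.
rewrite (bigD1 (Ordinal hj)) //= big1 ?addr0.
  by rewrite exprZn coefZ coefXn eqxx mulr1 exprS.
move=> i /negP hi; rewrite exprZn coefZ coefXn.
case: eqP => [e|_]; last by rewrite mulr0.
by exfalso; apply: hi; apply/eqP; apply: val_inj => /=.
Qed.

Lemma aux_geom (R : comNzRingType) (w zc x S : R) N : w * zc = 1 ->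
  (w*x)^+N - 1 = (w*x - 1)*S -> w*S*(zc - x) = 1 - x^+N * w^+N.
Proof.
move=> f e2.
have h : (w*x)^+N = x^+N * w^+N by rewrite exprMn mulrC.
rewrite -h -[1 - _]opprB e2.
have -> : w * S * (zc - x) = S * (w * zc) - S * (w * x) by ring.
rewrite f; ring.
Qed.

Lemma Pinv_mul z N : z != 0 -> Pinv z N * (z%:P - 'X) = 1 - 'X^N * ((z^-1)^+N)%:P.
Proof.
move=> hz.
rewrite /Pinv -!mul_polyC rmorphXn.
apply: aux_geom; first by rewrite -polyCM mulVf.
exact: subrX1.
Qed.

Definition M' z p N (Q : {poly algC}) := exists D R, M z p D /\ Q = D + 'X^N * R.

Lemma Mneg z p k t N : prime p -> odd p -> z^+k = 1 -> (0 < k)%N ->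
  M' z p N (1 - Pinv z N ^+ (k * t * p)%N).
Proof.
move=> hp hodd hz hk.
have hz0 : z != 0.
  apply/eqP => e; move: hz; rewrite e expr0n.
  by case: k hk => // k _ /= /eqP; rewrite eq_sym oner_eq0.
have Szi : Sz z (z^-1).
  have -> : z^-1 = z^+k.-1.
    by apply: mulr1_eq; rewrite -exprS prednK.
  exact: SzX_n.
have iW : intPol z (Pinv z N ^+ (k * t * p)%N).
  apply: intPXn; apply: intPZ => //; apply: intP_sum => j.
  apply: intPXn; apply: intPZ => //; exact: intPX.
have hD := Mpos _ _ _ t hp hodd hz.
have [R1 hR1] : exists R1, Pinv z N ^+ (k * t * p)%N * (z%:P - 'X) ^+ (k * t * p)%N - 1 = 'X^N * R1.
  rewrite -exprMn Pinv_mul // -(expr1n _ (k * t * p)%N) subrXX.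
  rewrite !expr1n (_ : 1 - 'X^N * _ - 1 = 'X^N * (- (z^-1 ^+ N)%:P)); last by ring.
  by rewrite -mulrA; eexists.
exists (- (Pinv z N ^+ (k * t * p)%N * (1 - (z%:P - 'X) ^+ (k * t * p)%N))), (- R1).
split; first by apply: MN; apply: MMl.
rewrite mulrN -hR1; ring.
Qed.

Lemma numfact (i lam p m j : nat) : (0 < p)%N ->
  (i%:Z < lam%:Z - 1 + p%:Z * (m%:Z - lam%:Z - 1))%R -> (j < lam)%N -> (lam <= m)%N ->
  (i < p * (m - j) + j)%N.
Proof.
move=> hp h1 h2 h3.
have e1 : (m - j = (m - lam) + (lam - j))%N by lia.
have e2 : (m%:Z - lam%:Z - 1 = (m - lam)%N%:Z - 1)%R by rewrite subzn.
rewrite e2 mulrBr mulr1 -PoszM in h1.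
have h5 : (lam - j <= p * (lam - j))%N by rewrite leq_pmull.
rewrite e1 mulnDr.
lia.
Qed.

Lemma final z p N lam m i D R : (0 < p)%N -> M z p D -> (i < N)%N ->
  (i%:Z < lam%:Z - 1 + p%:Z * (m%:Z - lam%:Z - 1))%R -> (lam <= m)%N ->
  Ip z p lam (((D + 'X^N * R) ^+ m)`_i).
Proof.
move=> hp hD hiN hi hlm.
have e := subrXX (D + 'X^N * R) D m.
move: e; set S := \sum_(j < m) _; clearbody S => e.
have -> : (D + 'X^N * R) ^+ m = D ^+ m + 'X^N * (R * S).
  have -> : 'X^N * (R * S) = (D + 'X^N * R - D) * S by ring.
  by rewrite -e [RHS]addrC subrK.
rewrite coefD coefXnM hiN addr0.
case: hD => U [V [hU [hV ->]]].
rewrite exprDn coef_sum; apply: Ip_sum => j; rewrite coefMn; apply: IpMn.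
have hjm : (j <= m)%N by rewrite -ltnS.
case: (leqP lam j) => hl.
- have -> : ('X^p * U) ^+ (m - j) * (p%:R * ('X * V)) ^+ j
      = ('X^p * U) ^+ (m - j) * ('X * V) ^+ j * (p ^ j)%:R.
    by rewrite natrX !exprMn; ring.
  rewrite mulr_natr coefMn -mulr_natl; apply: Ip_pow => //.
  apply: intPM; apply: intPXn; apply: intPM => //; [exact: intPXn (intPX z) | exact: intPX].
- have -> : ('X^p * U) ^+ (m - j) * (p%:R * ('X * V)) ^+ j
      = 'X^(p * (m - j) + j) * (U ^+ (m - j) * V ^+ j * (p ^ j)%:R).
    by rewrite exprD exprM natrX !exprMn; ring.
  rewrite coefXnM (numfact _ _ _ _ _ hp hi hl hlm); exact: Ip0.
Qed.

Lemma key (p k : nat) (z : algC) (r : int) N : prime p -> odd p -> z ^+ k = 1 ->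
  exists Zp : {poly algC}, (forall j, (j < N)%N -> Zp`_j = fps_zpow z (k%:Z * r * p%:Z) j)
    /\ M' z p N (1 - Zp).
Proof.
move=> hp hodd hz.
have pos : forall k' t, z ^+ k' = 1 ->
    exists Zp : {poly algC}, (forall j, (j < N)%N -> Zp`_j = fps_zpow z (Posz (k' * t * p)) j)
    /\ M' z p N (1 - Zp).
  move=> k' t hz'; exists ((z%:P - 'X) ^+ (k' * t * p)); split.
    move=> j hj; rewrite /=; apply: pow_agree => // j' _; exact: lin_agree.
  exists (1 - (z%:P - 'X) ^+ (k' * t * p)), 0; split; first exact: Mpos.
  by rewrite mulr0 addr0.
case: r => t.
  by rewrite -!PoszM; apply: pos.
case: k hz => [|k] hz.
  by rewrite !mul0r; apply: (pos 0%N 0%N); rewrite expr0.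
have hp0 : (0 < p)%N by apply: prime_gt0.
have hn : (0 < k.+1 * t.+1 * p)%N by rewrite !muln_gt0 hp0.
have -> : (k.+1)%:Z * Negz t * p%:Z = Negz (k.+1 * t.+1 * p).-1.
  rewrite !NegzE.
  have e : S (Nat.pred (k.+1 * t.+1 * p)) = (k.+1 * t.+1 * p)%N by lia.
  rewrite e !PoszM; ring.
exists (Pinv z N ^+ (k.+1 * t.+1 * p)); split.
  move=> j hj.
  have e : S (Nat.pred (k.+1 * t.+1 * p)) = (k.+1 * t.+1 * p)%N by lia.
  have e2 : fps_zpow z (Negz (k.+1 * t.+1 * p).-1) = fps_pow (fps_lin_inv z) (k.+1 * t.+1 * p).
    by rewrite -[in RHS]e.
  rewrite e2; apply: (pow_agree _ (Pinv z N) N) => // j' hj'; exact: (Pinv_coef z N j' hj').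
exact: (Mneg z p k.+1 t.+1 N hp hodd hz (ltn0Sn k)).
Qed.

Theorem lemma4p9 (p lam k : nat) (zeta : algC) (r : int) (m : nat) :
  prime p -> (5 <= p)%N -> zeta ^+ k = 1 -> (lam <= m)%N ->
  forall i : nat,
    (i%:Z < lam%:Z - 1 + p%:Z * (m%:Z - lam%:Z - 1))%R ->
    in_pow_ideal p lam zeta
      (fps_pow (fps_sub fps_one (fps_zpow zeta (k%:Z * r * p%:Z))) m i).
Proof.
move=> hp h5 hz hlm i hi.
have hodd : odd p.
  by case: (even_prime hp) => // e; rewrite e in h5.
have hp0 : (0 < p)%N by apply: prime_gt0.
have [Zp [hag [D [R [hD hQ]]]]] := key p k zeta r i.+1 hp hodd hz.
rewrite -(pow_agree _ (1 - Zp) i.+1) //; last first.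
  by move=> j hj; rewrite coefB coef1 hag.
rewrite hQ; apply: Ip_in; exact: final.
Qed.
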